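(* Let $\mathscr{V}\subset \mathbb{R}_{\max}^n$ be a max-plus cone with full support and $\{ \mathscr{H}_r \}_{r\in \mathbb{N}}$ be a decreasing sequence of half-spaces such that $\mathscr{V}\subset \mathscr{H}_r$ for all $r \in \mathbb{N}$. Then there exists a half-space $\mathscr{H}$ such that $\mathscr{H}=\cap_{r\in \mathbb{N}} \mathscr{H}_r$.
   Context: $\mathbb{R}_{\max}=\mathbb{R}\cup\{-\infty\}$ with $a\oplus b=\max(a,b)$ and $ab=a+b$; the zero element is $-\infty$. A max-plus cone is a subset $\mathscr{V}\subset\mathbb{R}_{\max}^n$ with $\lambda u\oplus\mu v\in\mathscr{V}$ for all $u,v\in\mathscr{V}$, $\lambda,\mu\in\mathbb{R}_{\max}$. A half-space is a set $\{x\in\mathbb{R}_{\max}^n : \max_i(a_i+x_i)\le \max_j(b_j+x_j)\}$ with $a,b\in\mathbb{R}_{\max}^n$. The support of $v$ is $\{k : v_k\neq-\infty\}$, the support of $\mathscr{V}$ is the union of supports of its elements, and $\mathscr{V}$ has full support if its support is $\{1,\dots,n\}$. *)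

(* Defs.v *)
From HB Require Import structures.
From mathcomp Require Import all_boot all_order all_algebra.
From mathcomp Require Import reals.
Set Implicit Arguments. Unset Strict Implicit. Unset Printing Implicit Defensive.
Import Order.TTheory GRing.Theory Num.Theory.
Local Open Scope ring_scope.

(* The max-plus semiring R_max = R ∪ {-oo}; None represents -oo. *)
Definition Rmax (R : realType) := option R.

Definition madd (R : realType) (a b : Rmax R) : Rmax R :=
  match a, b with
  | None, _ => b
  | _, None => a
  | Some x, Some y => Some (Num.max x y)
  end.

Definition mmul (R : realType) (a b : Rmax R) : Rmax R :=
  match a, b with
  | Some x, Some y => Some (x + y)
  | _, _ => None
  end.

Definition mle (R : realType) (a b : Rmax R) : Prop :=
  match a, b with
  | None, _ => True
  | Some _, None => False
  | Some x, Some y => x <= y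
  end.

Definition mvec (R : realType) (n : nat) := 'I_n -> Rmax R.

Definition mcomb (R : realType) (n : nat) (l : Rmax R) (u : mvec R n)
  (m : Rmax R) (v : mvec R n) : mvec R n :=
  fun i => madd (mmul l (u i)) (mmul m (v i)).

Definition mdot (R : realType) (n : nat) (a x : mvec R n) : Rmax R :=
  \big[@madd R/None]_(i < n) mmul (a i) (x i).

Definition is_cone (R : realType) (n : nat) (V : mvec R n -> Prop) : Prop :=
  forall (u v : mvec R n) (l m : Rmax R), V u -> V v -> V (mcomb l u m v).

Definition halfspace (R : realType) (n : nat) (a b : mvec R n) : mvec R n -> Prop :=
  fun x => mle (mdot a x) (mdot b x).

Definition full_support (R : realType) (n : nat) (V : mvec R n -> Prop) : Prop :=
  forall k : 'I_n, exists v, V v /\ v k <> None.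

(* Main.v *)
Require Import Defs.
From mathcomp Require Import all_boot all_order all_algebra.
From mathcomp Require Import reals boolp classical_sets lra.
Set Implicit Arguments. Unset Strict Implicit. Unset Printing Implicit Defensive.
Import Order.TTheory GRing.Theory Num.Theory.
Local Open Scope ring_scope.

Definition mlt (R : realType) (a b : Rmax R) : Prop :=
  match a, b with
  | _, None => False
  | None, Some _ => True
  | Some x, Some y => x < y
  end.

Lemma mlt_None (R : realType) (u : Rmax R) : mlt u None -> False.
Proof. by case: u. Qed.

Lemma mle_refl (R : realType) (a : Rmax R) : mle a a.
Proof. by case: a => //= x. Qed.

Lemma mle_trans (R : realType) (a b c : Rmax R) : mle a b -> mle b c -> mle a c.
Proof. case: a => [x|]; case: b => [y|]; case: c => [z|] //=; exact: le_trans. Qed.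

Lemma not_mle (R : realType) (a b : Rmax R) : ~ mle a b -> mlt b a.
Proof. case: a => [x|]; case: b => [y|] //= h; by rewrite ltNge; apply/negP. Qed.

Lemma mlt_nle (R : realType) (a b : Rmax R) : mlt a b -> ~ mle b a.
Proof. case: a => [x|]; case: b => [y|] //= h; try (by rewrite (lt_geF h)); by move=> []. Qed.

Lemma mlt_mle (R : realType) (a b : Rmax R) : mlt a b -> mle a b.
Proof. case: a => [x|]; case: b => [y|] //=; exact: ltW. Qed.

Lemma mle_lt_trans (R : realType) (a b c : Rmax R) : mle a b -> mlt b c -> mlt a c.
Proof. case: a => [x|]; case: b => [y|]; case: c => [z|] //=; exact: le_lt_trans. Qed.

Lemma mlt_le_trans (R : realType) (a b c : Rmax R) : mlt a b -> mle b c -> mlt a c.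
Proof. case: a => [x|]; case: b => [y|]; case: c => [z|] //=; exact: lt_le_trans. Qed.

Lemma mle_antisym (R : realType) (a b : Rmax R) : mle a b -> mle b a -> a = b.
Proof.
case: a => [x|]; case: b => [y|] //= h1 h2; congr Some; apply/eqP; by rewrite eq_le h1 h2.
Qed.

Lemma madd_l (R : realType) (a b : Rmax R) : mle a (madd a b).
Proof. case: a => [x|]; case: b => [y|] //=; by rewrite le_max lexx. Qed.

Lemma madd_r (R : realType) (a b : Rmax R) : mle b (madd a b).
Proof. case: a => [x|]; case: b => [y|] //=; by rewrite le_max lexx ?orbT. Qed.

Lemma madd_lub (R : realType) (a b c : Rmax R) : mle a c -> mle b c -> mle (madd a b) c.
Proof. case: a => [x|]; case: b => [y|]; case: c => [z|] //= h1 h2; by rewrite ge_max h1 h2. Qed.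

Lemma madd_cases (R : realType) (a b : Rmax R) : madd a b = a \/ madd a b = b.
Proof.
case: a => [x|]; case: b => [y|] /=; try by [left|right].
rewrite /Num.max; case: ifP; by [right|left].
Qed.

Lemma mmul_mono (R : realType) (a a' x x' : Rmax R) :
  mle a a' -> mle x x' -> mle (mmul a x) (mmul a' x').
Proof. case: a => [?|]; case: a' => [?|]; case: x => [?|]; case: x' => [?|] //= h1 h2; exact: lerD. Qed.

Lemma big_ge_seq (R : realType) (I : eqType) (s : seq I) (F : I -> Rmax R) i :
  i \in s -> mle (F i) (\big[@madd R/None]_(j <- s) F j).
Proof.
elim: s => // h s IH; rewrite inE big_cons => /orP [/eqP->|/IH h2].
  exact: madd_l.
exact: mle_trans h2 (madd_r _ _).
Qed.

Lemma big_ge (R : realType) (n : nat) (F : 'I_n -> Rmax R) i :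
  mle (F i) (\big[@madd R/None]_(j < n) F j).
Proof. by apply: big_ge_seq; rewrite mem_index_enum. Qed.

Lemma big_lub (R : realType) (n : nat) (F : 'I_n -> Rmax R) m :
  (forall i, mle (F i) m) -> mle (\big[@madd R/None]_(j < n) F j) m.
Proof.
move=> h; apply: (big_ind (fun y => mle y m)) => //= x y; exact: madd_lub.
Qed.

Lemma big_att (R : realType) (n : nat) (F : 'I_n -> Rmax R) :
  \big[@madd R/None]_(j < n) F j = None \/ exists i, \big[@madd R/None]_(j < n) F j = F i.
Proof.
apply: (big_ind (fun y => y = None \/ exists i, y = F i)); first by left.
  move=> x y hx hy; case: (madd_cases x y) => ->; by [].
by move=> i _; right; exists i.
Qed.

Lemma mdot_ge (R : realType) (n : nat) (a x : mvec R n) i :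
  mle (mmul (a i) (x i)) (mdot a x).
Proof. rewrite /mdot; exact: (big_ge (fun j => mmul (a j) (x j))). Qed.

Lemma mdot_lub (R : realType) (n : nat) (a x : mvec R n) m :
  (forall i, mle (mmul (a i) (x i)) m) -> mle (mdot a x) m.
Proof. move=> h; have := @big_lub R n (fun j => mmul (a j) (x j)) m h. by []. Qed.

Lemma mdot_att (R : realType) (n : nat) (a x : mvec R n) :
  mdot a x = None \/ exists i, mdot a x = mmul (a i) (x i).
Proof. rewrite /mdot; exact: (big_att (fun j => mmul (a j) (x j))). Qed.

Lemma mdot_mono (R : realType) (n : nat) (a a' x x' : mvec R n) :
  (forall i, mle (a i) (a' i)) -> (forall i, mle (x i) (x' i)) ->
  mle (mdot a x) (mdot a' x').
Proof.
move=> ha hx; apply: mdot_lub => i; apply: mle_trans (mdot_ge a' x' i).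
exact: mmul_mono.
Qed.

Definition mshift (R : realType) (y : Rmax R) (c : R) : Rmax R := omap (fun t => t + c) y.

Lemma mshift_mle (R : realType) (u w : Rmax R) c : mle (mshift u c) (mshift w c) <-> mle u w.
Proof. case: u => [?|]; case: w => [?|] //=; by rewrite lerD2r. Qed.

Lemma mmul_shift (R : realType) (u y : Rmax R) c : mmul (mshift u c) y = mshift (mmul u y) c.
Proof. case: u => [?|]; case: y => [?|] //=; congr Some; by rewrite addrAC. Qed.

Lemma mdot_shift (R : realType) (n : nat) (a x : mvec R n) c :
  mdot (fun i => mshift (a i) c) x = mshift (mdot a x) c.
Proof.
apply: mle_antisym.
  apply: mdot_lub => i; rewrite mmul_shift mshift_mle; exact: mdot_ge.
case: (mdot_att a x) => [->//|[i ->]].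
by rewrite -mmul_shift; apply: (mdot_ge (fun i => mshift (a i) c)).
Qed.

Lemma halfspace_shift (R : realType) (n : nat) (a b x : mvec R n) c :
  halfspace a b x <-> halfspace (fun i => mshift (a i) c) (fun i => mshift (b i) c) x.
Proof. by rewrite /halfspace !mdot_shift mshift_mle. Qed.

Definition mltb (R : realType) (a b : Rmax R) : bool :=
  match a, b with
  | _, None => false
  | None, Some _ => true
  | Some x, Some y => x < y
  end.

Lemma mltbP (R : realType) (a b : Rmax R) : mltb a b <-> mlt a b.
Proof. by case: a => [?|]; case: b => [?|]. Qed.

Lemma mlt_mmul (R : realType) (u w y : Rmax R) : mlt u w -> y <> None -> mlt (mmul u y) (mmul w y).
Proof. case: u => [?|]; case: w => [?|]; case: y => [?|] //= h _; by rewrite ltrD2r. Qed.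

Lemma mdot_None (R : realType) (n : nat) (a x : mvec R n) i : x i <> None ->
  mmul (a i) (x i) <> None -> a i <> None.
Proof. by case: (a i). Qed.

Lemma halfspace_drop (R : realType) (n : nat) (a b x : mvec R n) :
  halfspace a b x <->
  halfspace (fun i => if mltb (b i) (a i) then a i else None)
            (fun i => if mltb (b i) (a i) then None else b i) x.
Proof.
rewrite /halfspace; split => h.
  apply: mle_trans (_ : mle (mdot a x) _).
    apply: mdot_mono => i; last exact: mle_refl.
    case: ifP => _ //; exact: mle_refl.
  have h0 := h.
  apply: (mle_trans h0).
  case: (mdot_att b x) => [->//|[j Ej]]; rewrite Ej.
  case E: (mltb (b j) (a j)); last first.
    have := mdot_ge (fun i => if mltb (b i) (a i) then None else b i) x j.
    by rewrite /= E.
  case Exj: (x j) => [xj|]; last by case: (b j).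
  have h3 := mlt_mmul (y:=Some xj) (proj1 (mltbP _ _) E) (ltac:(by []) : Some xj <> None).
  exfalso; apply: (mlt_nle h3); rewrite -Exj -Ej.
  apply: mle_trans h; exact: mdot_ge.
apply: mle_trans (_ : mle (mdot (fun i => if mltb (b i) (a i) then None else b i) x) _); last first.
  apply: mdot_mono => i; last exact: mle_refl.
  case: ifP => _ //; exact: mle_refl.
apply: mdot_lub => i.
case E: (mltb (b i) (a i)).
  apply: mle_trans h.
  have := mdot_ge (fun i => if mltb (b i) (a i) then a i else None) x i.
  by rewrite /= E.
have := mdot_ge (fun i => if mltb (b i) (a i) then None else b i) x i.
rewrite /= E; apply: mle_trans; apply: mmul_mono; last exact: mle_refl.
case: (pselect (mle (a i) (b i))) => // /not_mle /mltbP; by rewrite E.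
Qed.

Definition Tset (R : realType) (S : nat -> Prop) (u : nat -> Rmax R) : set R :=
  fun m => forall N, exists r, (N <= r)%N /\ S r /\ mlt (Some m) (u r).

Definition lsup (R : realType) (S : nat -> Prop) (u : nat -> Rmax R) : Rmax R :=
  if pselect (exists m, Tset S u m) then Some (sup (Tset S u)) else None.

Lemma lsup_io (R : realType) (S : nat -> Prop) (u : nat -> Rmax R) (m : R) :
  mlt (Some m) (lsup S u) -> forall N, exists r, (N <= r)%N /\ S r /\ mlt (Some m) (u r).
Proof.
rewrite /lsup; case: pselect => // ne /= lt N.
have [y Ty my] := sup_gt ne lt.
have [r [Nr [Sr yr]]] := Ty N.
exists r; split => //; split => //.
exact: (mle_lt_trans (ltW my : mle (Some m) (Some y)) yr).
Qed.

Lemma lsup_ev (R : realType) (S : nat -> Prop) (u : nat -> Rmax R) (K : R) :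
  (forall r, S r -> mle (u r) (Some K)) ->
  forall m : R, mlt (lsup S u) (Some m) ->
  exists N, forall r, (N <= r)%N -> S r -> mle (u r) (Some m).
Proof.
move=> hK m hm; apply: contrapT => hn.
have Tm : Tset S u m.
  move=> N; apply: contrapT => hN; apply: hn; exists N => r Nr Sr.
  apply: contrapT => hr; apply: hN; exists r; split => //; split => //.
  exact: not_mle.
have ub : has_ubound (Tset S u).
  exists K => y Ty; have [r [_ [Sr yr]]] := Ty 0%N.
  have := mlt_le_trans yr (hK r Sr); exact: ltW.
move: hm; rewrite /lsup; case: pselect => [ne|]; last by move=> h; exfalso; apply: h; exists m.
move=> /= hs; have := ub_le_sup ub Tm.
by rewrite leNgt hs.
Qed.

Lemma fin_ev (T : finType) (P : T -> nat -> Prop) :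
  (forall t, exists N, forall r, (N <= r)%N -> P t r) ->
  exists N, forall t r, (N <= r)%N -> P t r.
Proof.
move=> h.
suff [N HN] : exists N, forall t, t \in enum T -> forall r, (N <= r)%N -> P t r.
  by exists N => t r Nr; apply: HN => //; rewrite mem_enum.
elim: (enum T) => [|t s [N IH]]; first by exists 0%N.
have [N1 H1] := h t; exists (maxn N N1) => t' /[1!inE] /orP [/eqP-> | ts] r Nr.
  by apply: H1; apply: leq_trans Nr; rewrite leq_maxr.
by apply: IH => //; apply: leq_trans Nr; rewrite leq_maxl.
Qed.

Lemma pigeon (T : finType) (Q : nat -> Prop) (f : nat -> T) :
  (forall N, exists r, (N <= r)%N /\ Q r) ->
  exists t, forall N, exists r, (N <= r)%N /\ Q r /\ f r = t.
Proof.
move=> h; apply: contrapT => hn.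
have [N HN] : exists N, forall t r, (N <= r)%N -> ~ (Q r /\ f r = t).
  apply: fin_ev => t; apply: contrapT => ht; apply: hn; exists t => N.
  apply: contrapT => hN; apply: ht; exists N => r Nr [Qr fr].
  by apply: hN; exists r.
have [r [Nr Qr]] := h N.
exact: (HN (f r) r Nr).
Qed.

Lemma dec_le (R : realType) (n : nat) (a b : nat -> mvec R n) :
  (forall r x, halfspace (a r.+1) (b r.+1) x -> halfspace (a r) (b r) x) ->
  forall r0 r x, (r0 <= r)%N -> halfspace (a r) (b r) x -> halfspace (a r0) (b r0) x.
Proof.
move=> hdec r0 r x; elim: r => [|r IH].
  by rewrite leqn0 => /eqP ->.
rewrite leq_eqVlt => /orP [/eqP -> //| lt] h.
exact: IH lt (hdec _ _ h).
Qed.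

Lemma madd_None (R : realType) (u w : Rmax R) : madd u w = None -> u = None /\ w = None.
Proof. by case: u => [?|]; case: w => [?|]. Qed.

Lemma mmul0_None (R : realType) (u : Rmax R) : mmul (Some 0) u = None -> u = None.
Proof. by case: u. Qed.

Lemma finite_vec (R : realType) (n : nat) (V : mvec R n -> Prop) :
  is_cone V -> full_support V -> (exists w, V w) ->
  exists v, V v /\ forall i, v i <> None.
Proof.
move=> hc hf [w0 Vw0].
suff H : forall k, exists v, V v /\ forall i : 'I_n, (i < k)%N -> v i <> None.
  have [v [Vv Hv]] := H n; by exists v; split => // i; apply: Hv.
elim => [|k [v [Vv Hv]]]; first by exists w0.
case: (ltnP k n) => hk; last first.
  exists v; split => // i _; apply: Hv; exact: leq_trans (ltn_ord i) hk.
have [w [Vw Hw]] := hf (Ordinal hk).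
exists (mcomb (Some 0) v (Some 0) w); split; first exact: hc.
move=> i; rewrite ltnS leq_eqVlt => /orP [/eqP ei | lt].
  have -> : i = Ordinal hk by apply: val_inj.
  by rewrite /mcomb => /madd_None [_ /mmul0_None h]; apply: Hw.
by rewrite /mcomb => /madd_None [/mmul0_None h _]; apply: (Hv i lt h).
Qed.

Lemma ev_term (R : realType) (S : nat -> Prop) (u : nat -> Rmax R) (K : R) (y : Rmax R) (m : R) :
  (forall r, S r -> mle (u r) (Some K)) ->
  mlt (mmul (lsup S u) y) (Some m) ->
  exists N, forall r, (N <= r)%N -> S r -> mle (mmul (u r) y) (Some m).
Proof.
move=> hK; case: y => [z|]; last by move=> _; exists 0%N => r _ _; case: (u r).
move=> h; have h' : mlt (lsup S u) (Some (m - z)).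
  by move: h; case: (lsup S u) => //= l; rewrite ltrBrDr.
have [N HN] := lsup_ev hK h'; exists N => r Nr Sr; have := HN r Nr Sr.
by case: (u r) => //= ur; rewrite lerBrDr.
Qed.

Lemma io_term (R : realType) (S : nat -> Prop) (u : nat -> Rmax R) (z m : R) :
  mlt (Some m) (mmul (lsup S u) (Some z)) ->
  forall N, exists r, (N <= r)%N /\ S r /\ mlt (Some m) (mmul (u r) (Some z)).
Proof.
move=> h; have h' : mlt (Some (m - z)) (lsup S u).
  by move: h; case: (lsup S u) => //= l; rewrite ltrBlDr.
move=> N; have [r [Nr [Sr hr]]] := lsup_io h' N; exists r; split => //; split => //.
by move: hr; case: (u r) => //= ur; rewrite ltrBlDr.
Qed.

Lemma dense_mlt (R : realType) (u : Rmax R) (t : R) :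
  mlt u (Some t) -> exists m, mlt u (Some m) /\ m < t.
Proof.
case: u => [s|] /= h.
  by exists ((s + t) / 2); split; lra.
by exists (t - 1); split => //; lra.
Qed.

Lemma drop_ge (R : realType) (n : nat) (a b x : mvec R n) :
  halfspace a b x ->
  mle (mdot b x) (mdot (fun i => if mltb (b i) (a i) then None else b i) x).
Proof.
rewrite /halfspace => h.
case: (mdot_att b x) => [->//|[j Ej]]; rewrite Ej.
case E: (mltb (b j) (a j)); last first.
  have := mdot_ge (fun i => if mltb (b i) (a i) then None else b i) x j.
  by rewrite /= E.
case Exj: (x j) => [xj|]; last by case: (b j).
have h3 := mlt_mmul (y:=Some xj) (proj1 (mltbP _ _) E) (ltac:(by []) : Some xj <> None).
exfalso; apply: (mlt_nle h3); rewrite -Exj -Ej.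
apply: mle_trans h; exact: mdot_ge.
Qed.

Theorem lemma3p3 (R : realType) (n : nat) (V : mvec R n -> Prop)
  (a b : nat -> mvec R n) :
  is_cone V -> full_support V ->
  (forall r x, halfspace (a r.+1) (b r.+1) x -> halfspace (a r) (b r) x) ->
  (forall r x, V x -> halfspace (a r) (b r) x) ->
  exists (c d : mvec R n),
    forall x, halfspace c d x <-> (forall r, halfspace (a r) (b r) x).
Proof.
move=> hc hf hdec hV.
have hle := dec_le hdec.
pose z : mvec R n := fun _ => None.
case: (pselect (exists w, V w)) => [hne|hne]; last first.
  exists z, z => x; split => _; last exact: mle_refl.
  move=> r; rewrite /halfspace; case: (mdot_att (a r) x) => [->//|[i _]].
  exfalso; have [w [Vw _]] := hf i; apply: hne; by exists w.
have [v [Vv Hv]] := finite_vec hc hf hne.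
pose vv i := odflt 0 (v i).
have Ev : forall i, v i = Some (vv i).
  by move=> i; rewrite /vv; case: (v i) (Hv i).
case: (pselect (forall N, exists r, (N <= r)%N /\ mdot (b r) v <> None)) => [hinf|hfin]; last first.
  have [N HN] : exists N, forall r, (N <= r)%N -> mdot (b r) v = None.
    apply: contrapT => h; apply: hfin => N; apply: contrapT => hN; apply: h.
    exists N => r Nr; apply: contrapT => hr; apply: hN; by exists r.
  exists z, z => x; split => _; last exact: mle_refl.
  move=> r; apply: (hle r (maxn r N)); first by rewrite leq_maxl.
  have Ha := hV (maxn r N) v Vv; rewrite /halfspace (HN _ (leq_maxr r N)) in Ha.
  rewrite /halfspace; suff -> : mdot (a (maxn r N)) x = None by [].
  apply: mle_antisym; last by [].
  apply: mdot_lub => i; have := mle_trans (mdot_ge (a (maxn r N)) v i) Ha.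
  by rewrite Ev; case: (a (maxn r N) i).
pose pat r : {ffun 'I_n -> bool} := [ffun i => mltb (b r i) (a r i)].
have [p Hp] := pigeon pat hinf.
pose S r := mdot (b r) v <> None /\ pat r = p.
pose M r := odflt 0 (mdot (b r) v).
pose A r i := mshift (if p i then a r i else None) (- M r).
pose B r j := mshift (if p j then None else b r j) (- M r).
have Ep : forall r, S r -> forall i, mltb (b r i) (a r i) = p i.
  by move=> r [_ Pr] i; rewrite -Pr ffunE.
have E1 : forall r, S r -> (fun i => if mltb (b r i) (a r i) then a r i else None)
    = (fun i => if p i then a r i else None).
  by move=> r Sr; apply: funext => i; rewrite Ep.
have E2 : forall r, S r -> (fun i => if mltb (b r i) (a r i) then None else b r i)
    = (fun i => if p i then None else b r i).
  by move=> r Sr; apply: funext => i; rewrite Ep.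
have HSeq : forall r x, S r -> (halfspace (a r) (b r) x <-> halfspace (A r) (B r) x).
  move=> r x Sr; apply: iff_trans (halfspace_drop _ _ _) _.
  rewrite (E1 r Sr) (E2 r Sr); exact: halfspace_shift.
have hMr : forall r, S r -> mdot (b r) v = Some (M r).
  by move=> r [h _]; rewrite /M; case: (mdot (b r) v) h.
have bndA : forall i r, S r -> mle (A r i) (Some (- vv i)).
  move=> i r Sr; have := mle_trans (mdot_ge (a r) v i) (hV r v Vv).
  rewrite hMr // Ev /A; case: (p i) => //=; case: (a r i) => //= ar h; lra.
have bndB : forall i r, S r -> mle (B r i) (Some (- vv i)).
  move=> i r Sr; have := mdot_ge (b r) v i.
  rewrite hMr // Ev /B; case: (p i) => //=; case: (b r i) => //= ar h; lra.
have normB : forall r, S r -> mle (Some 0) (mdot (B r) v).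
  move=> r Sr; rewrite /B mdot_shift; have := drop_ge (hV r v Vv).
  rewrite hMr // (E2 r Sr).
  by case: (mdot (fun i => if p i then None else b r i) v) => //= y h; lra.
pose c i := lsup S (fun r => A r i).
pose d j := lsup S (fun r => B r j).
have cN : forall i, ~~ p i -> c i = None.
  move=> i hp; rewrite /c /lsup; case: pselect => // [[m Tm]]; exfalso.
  have [r [_ [_ h]]] := Tm 0%N; move: h; by rewrite /A (negbTE hp).
have dN : forall i, p i -> d i = None.
  move=> i hp; rewrite /d /lsup; case: pselect => // [[m Tm]]; exfalso.
  have [r [_ [_ h]]] := Tm 0%N; move: h; by rewrite /B hp.
have Sinf : forall N, exists r, (N <= r)%N /\ S r.
  by move=> N; have [r [Nr [Qr Pr]]] := Hp N; exists r.
exists c, d => x; split.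
- move=> hx r0; apply: contrapT => hr0.
  have lt0 := not_mle hr0.
  move: lt0; case Eat: (mdot (a r0) x) => [t|] lt0; last by case: (mlt_None lt0).
  have exd : exists j, d j <> None.
    apply: contrapT => hno.
    have hall : forall j, d j = None.
      move=> j; apply: contrapT => hj; apply: hno; by exists j.
    have [N HN] : exists N, forall j r, (N <= r)%N -> S r ->
        mle (mmul (B r j) (v j)) (Some (-1)).
      apply: fin_ev => j; apply: (ev_term (bndB j)).
      by have := hall j; rewrite /d => ->.
    have [r [Nr Sr]] := Sinf N.
    have h1 := normB r Sr.
    have h2 : mle (mdot (B r) v) (Some (-1)) := mdot_lub (fun j => HN j r Nr Sr).
    have := mle_trans h1 h2; rewrite /=; lra.
  have [j [dj [Edj Hj]]] : exists j dj, d j = Some dj /\ mle (mdot d x) (mmul (d j) (x j)).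
    case Ed: (mdot d x) => [D|].
      case: (mdot_att d x) => [E0|[j Ej]]; first by rewrite Ed in E0.
      rewrite Ed in Ej.
      exists j; move: Ej; case E: (d j) => [dj|] // Ej; exists dj; split => //.
      by move: Ej; case: (x j) => //= xj [->].
    have [j hj] := exd; exists j; move: hj; case E: (d j) => [dj|] // _; by exists dj.
  have cj : c j = None.
    apply: cN; apply/negP => pj; have := dN j pj; by rewrite Edj.
  have [y [Hy1 Hy2]] : exists y : R, (forall z, x j = Some z -> z < y) /\
      (forall bb, b r0 j = Some bb -> bb + y < t).
    have hbt := mle_lt_trans (mdot_ge (b r0) x j) lt0.
    move: hbt; case: (x j) => [z0|]; case: (b r0 j) => [bb|] /= hbt.
    - exists ((z0 + (t - bb)) / 2); split => [z' [<-]|bb' [<-]]; lra.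
    - exists (z0 + 1); split => [z' [<-]|//]; lra.
    - exists (t - bb - 1); split => [//|bb' [<-]]; lra.
    - by exists 0; split.
  pose x' := fun i => if i == j then Some y else x i.
  have xx' : forall i, mle (x i) (x' i).
    move=> i; rewrite /x'; case: eqP => [->|_]; last exact: mle_refl.
    case E: (x j) => [z0|] //=; apply: ltW; exact: Hy1.
  have hb' : mlt (mdot (b r0) x') (Some t).
    case: (mdot_att (b r0) x') => [->//|[i ->]].
    rewrite /x'; case: eqP => [->|_].
      case E: (b r0 j) => [bb|] //=; exact: Hy2.
    exact: mle_lt_trans (mdot_ge _ _ i) lt0.
  have ha' : mle (Some t) (mdot (a r0) x').
    rewrite -Eat; apply: mdot_mono => // i; exact: mle_refl.
  have notH : ~ halfspace (a r0) (b r0) x'.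
    rewrite /halfspace => h; apply: (mlt_nle hb'); exact: mle_trans ha' h.
  have hc' : mlt (mdot c x') (Some (dj + y)).
    have h1 : mle (mdot c x') (mdot d x).
      apply: mle_trans hx; apply: mdot_lub => i.
      rewrite /x'; case: eqP => [->|_]; first by rewrite cj.
      exact: mdot_ge.
    apply: mle_lt_trans h1 _; apply: mle_lt_trans Hj _; rewrite Edj.
    case E: (x j) => [z0|] //=; have := Hy1 z0 E; lra.
  have [m [Hm1 Hm2]] := dense_mlt hc'.
  have [N HN] : exists N, forall i r, (N <= r)%N -> S r ->
      mle (mmul (A r i) (x' i)) (Some m).
    apply: fin_ev => i; apply: (ev_term (bndA i)).
    exact: mle_lt_trans (mdot_ge c x' i) Hm1.
  have hio : mlt (Some m) (mmul (d j) (Some y)) by rewrite Edj /=; lra.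
  have [r [Nr [Sr hr]]] := io_term hio (maxn N r0).
  apply: notH; apply: (hle r0 r); first exact: leq_trans (leq_maxr N r0) Nr.
  apply/(HSeq r x' Sr); rewrite /halfspace.
  apply: mle_trans (mdot_lub (fun i => HN i r (leq_trans (leq_maxl N r0) Nr) Sr)) _.
  apply: mlt_mle; apply: mlt_le_trans hr _.
  have -> : Some y = x' j by rewrite /x' eqxx.
  exact: mdot_ge.
- move=> hall; apply: contrapT => hn; have lt := not_mle hn.
  move: lt; case: (mdot_att c x) => [-> /mlt_None //|[i ->]].
  case Eci: (c i) => [s|]; last by move/mlt_None.
  case Exi: (x i) => [xi|]; last by move/mlt_None.
  move=> /= lt.
  have [m [Hm1 Hm2]] := dense_mlt lt.
  have [N HN] : exists N, forall j r, (N <= r)%N -> S r ->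
      mle (mmul (B r j) (x j)) (Some m).
    apply: fin_ev => j; apply: (ev_term (bndB j)).
    exact: mle_lt_trans (mdot_ge d x j) Hm1.
  have hio : mlt (Some m) (mmul (c i) (Some xi)) by rewrite Eci /=; lra.
  have [r [Nr [Sr hr]]] := io_term hio N.
  have h := proj1 (HSeq r x Sr) (hall r).
  have h2 : mle (mdot (B r) x) (Some m) := mdot_lub (fun j => HN j r Nr Sr).
  have h3 : mle (mmul (A r i) (Some xi)) (mdot (A r) x).
    by rewrite -Exi; exact: mdot_ge.
  apply: (mlt_nle hr); exact: mle_trans h3 (mle_trans h h2).
Qed.
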